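(* Let $\widetilde{\mathcal R}\subseteq\mathcal R$ be finite and let $\mathcal R_1,\mathcal R_2$ be produced from $\widetilde{\mathcal R}$ by the selection procedure. Then: (i) $\mathcal R_1\sqcup\mathcal R_2=\widetilde{\mathcal R}$ and $\big|\bigcup_{R\in\mathcal R_2}R\big|\le 25\sum_{R\in\mathcal R_1}|R|$; (ii) whenever $R,R'\in\mathcal R_1$ are distinct, $R\cap R'\neq\emptyset$ and $L(R)\le L(R')$, we have $\mathrm{slope}(R)\not\supseteq\mathrm{slope}(R')$.
   Context: Dyadic model. Fix $0<\delta\le1$ and $w=2^{-m}$ for an integer $m\ge1$. All dyadic intervals are half-open, $[j2^{-k},(j+1)2^{-k})$. For $k\ge0$, $S_k$ is the set of dyadic subintervals of $[0,1)$ of length $2^{-k}$ (slopes); $c_s$ is the center of $s$. Let $u:[0,1)\to S_m$ be measurable. Let $\mathcal D$ be the dyadic intervals $I\subseteq[0,1)$ with $|I|\ge w$, $k(I)=\log_2(|I|/w)$, $\mathrm{Pop}_I(s)=\frac1{|I|}|\{x\in I:u(x)\subseteq s\}|$, $S(I)=\{s\in S_{k(I)}:\mathrm{Pop}_I(s)\ge\delta\}$. The parallelogram $P(I,s,b)=\{(x,y):x\in I,\ b\le y-c_sx<b+w\}$ ($I\in\mathcal D$, $s\in S_{k(I)}$, $b\in\mathbb R$) has $\mathrm{int}(P)=I$, $\mathrm{slope}(P)=s$, $L(P)=|I|$; $\mathcal R$ is the collection of these with $s\in S(I)$. For such $R$ with center $(x_0,y_0)$, $5R=\{(x,y):|x-x_0|\le\tfrac52|I|,\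 |y-y_0-c_s(x-x_0)|\le\tfrac52 w\}$. Selection procedure: start with $\mathcal R_1=\mathcal R_2=\emptyset$; while $\widetilde{\mathcal R}\ne\emptyset$, choose $R\in\widetilde{\mathcal R}$ of maximal length $L(R)$, move it from $\widetilde{\mathcal R}$ to $\mathcal R_1$, and then move to $\mathcal R_2$ every $R'\in\widetilde{\mathcal R}$ with $R'\subseteq\bigcup_{R''\in\mathcal R_1}5R''$. *)

(* Defs.v *)
From Stdlib Require Import Reals Lra Lia List ClassicalEpsilon Relations.
Open Scope R_scope.

Definition cover1 (A : R -> Prop) (v : R) : Prop :=
  exists a b : nat -> R,
    (forall n, a n <= b n) /\
    (forall x, A x -> exists n, a n <= x < b n) /\
    infinite_sum (fun n => b n - a n) v.

Definition is_outer1 (A : R -> Prop) (m : R) : Prop :=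
  (forall v, cover1 A v -> m <= v) /\
  (forall e, 0 < e -> exists v, cover1 A v /\ v < m + e).

Definition outer1 (A : R -> Prop) : R := epsilon (inhabits 0) (is_outer1 A).

(* Caratheodory measurability (tested on sets of finite outer measure) *)
Definition measurable1 (A : R -> Prop) : Prop :=
  forall E me, is_outer1 E me ->
    exists m1 m2, is_outer1 (fun x => E x /\ A x) m1 /\
                  is_outer1 (fun x => E x /\ ~ A x) m2 /\ me = m1 + m2.

Definition cover2 (A : R * R -> Prop) (v : R) : Prop :=
  exists a b c d : nat -> R,
    (forall n, a n <= b n /\ c n <= d n) /\
    (forall p, A p -> exists n, a n <= fst p < b n /\ c n <= snd p < d n) /\
    infinite_sum (fun n => (b n - a n) * (d n - c n)) v.

Definition is_outer2 (A : R * R -> Prop) (m : R) : Prop :=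
  (forall v, cover2 A v -> m <= v) /\
  (forall e, 0 < e -> exists v, cover2 A v /\ v < m + e).

Definition outer2 (A : R * R -> Prop) : R := epsilon (inhabits 0) (is_outer2 A).

Definition dyad (k j : nat) (x : R) : Prop :=
  INR j / 2 ^ k <= x < (INR j + 1) / 2 ^ k.

Definition wd (m : nat) : R := / 2 ^ m.

(* a parallelogram P(I,s,b): I = dyad pk pj, s = dyad (m - pk) ps, offset pb *)
Record prl := mkP { pk : nat; pj : nat; ps : nat; pb : R }.

(* level of the slope: k(I) = log2(|I|/w) = m - pk *)
Definition slk (m : nat) (P : prl) : nat := (m - pk P)%nat.

Definition slope_set (m : nat) (P : prl) : R -> Prop := dyad (slk m P) (ps P).

Definition cs (m : nat) (P : prl) : R := (INR (ps P) + / 2) / 2 ^ (slk m P).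

Definition Lp (P : prl) : R := / 2 ^ (pk P).

Definition par_set (m : nat) (P : prl) (p : R * R) : Prop :=
  dyad (pk P) (pj P) (fst p) /\
  pb P <= snd p - cs m P * fst p < pb P + wd m.

Definition fiveR (m : nat) (P : prl) (p : R * R) : Prop :=
  let x0 := (INR (pj P) + / 2) / 2 ^ (pk P) in
  let c := cs m P in
  let y0 := c * x0 + pb P + wd m / 2 in
  Rabs (fst p - x0) <= 5 / 2 * Lp P /\
  Rabs (snd p - y0 - c * (fst p - x0)) <= 5 / 2 * wd m.

(* Pop_I(s) for I = dyad k j, s = dyad sk sj; u x is the index of u(x) in S_m *)
Definition Pop (m : nat) (u : R -> nat) (k j sk sj : nat) : R :=
  outer1 (fun x => dyad k j x /\
                   (forall y, dyad m (u x) y -> dyad sk sj y)) / (/ 2 ^ k).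

Definition inRcal (delta : R) (m : nat) (u : R -> nat) (P : prl) : Prop :=
  (pk P <= m)%nat /\ (pj P < 2 ^ pk P)%nat /\ (ps P < 2 ^ slk m P)%nat /\
  Pop m u (pk P) (pj P) (slk m P) (ps P) >= delta.

Record state := mkS { St : prl -> Prop; S1 : prl -> Prop; S2 : prl -> Prop }.

Definition covered5 (m : nat) (A : prl -> Prop) (P : prl) : Prop :=
  forall p, par_set m P p -> exists Q, A Q /\ fiveR m Q p.

Definition sel_step (m : nat) (s s' : state) : Prop :=
  exists R0, St s R0 /\ (forall R', St s R' -> Lp R' <= Lp R0) /\
    (forall X, S1 s' X <-> S1 s X \/ X = R0) /\
    (forall X, S2 s' X <-> S2 s X \/
                 (St s X /\ X <> R0 /\ covered5 m (S1 s') X)) /\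
    (forall X, St s' X <-> St s X /\ X <> R0 /\ ~ covered5 m (S1 s') X).

Definition selection (m : nat) (Rt : list prl) (R1 R2 : prl -> Prop) : Prop :=
  exists s, clos_refl_trans_1n state (sel_step m)
              (mkS (fun X => In X Rt) (fun _ => False) (fun _ => False)) s /\
            (forall X, ~ St s X) /\
            (forall X, S1 s X <-> R1 X) /\ (forall X, S2 s X <-> R2 X).

Definition sum_area (m : nat) (l : list prl) : R :=
  fold_right (fun P acc => outer2 (par_set m P) + acc) 0 l.

(* Main.v *)
Require Import Defs.
From Stdlib Require Import Reals Lra Lia List ClassicalEpsilon Relations Classical.
Open Scope R_scope.

Definition has_cov (A : R*R -> Prop) := exists v, cover2 A v.

Lemma isum_nonneg f v : (forall n, 0 <= f n) -> infinite_sum f v -> 0 <= v.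
Proof.
  intros Hf Hs. destruct (Rle_or_lt 0 v) as [H|H]; auto.
  destruct (Hs (- v)) as [N HN]; [lra|].
  specialize (HN N (le_n N)). unfold Rdist in HN.
  pose proof (cond_pos_sum f N Hf).
  revert HN; split_Rabs; lra.
Qed.

Lemma cover2_nonneg A v : cover2 A v -> 0 <= v.
Proof.
  intros (a&b&c&d&H1&H2&H3). apply (isum_nonneg _ _ ) in H3; auto.
  intro n; destruct (H1 n). apply Rmult_le_pos; lra.
Qed.

Lemma has_cov_outer A : has_cov A -> is_outer2 A (outer2 A).
Proof.
  intros [v0 Hv0]. unfold outer2. apply epsilon_spec.
  set (E := fun x => cover2 A (- x)).
  assert (Hb : bound E). { exists 0. intros x Hx. apply cover2_nonneg in Hx. lra. }
  assert (He : exists x, E x). { exists (- v0). unfold E. now rewrite Ropp_involutive. }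
  destruct (completeness E Hb He) as [l [Hl1 Hl2]].
  exists (- l). split.
  - intros v Hv. assert (E (- v)) by (unfold E; now rewrite Ropp_involutive).
    apply Hl1 in H. lra.
  - intros e He0. apply NNPP. intro Hn.
    assert (is_upper_bound E (l - e)).
    { intros x Hx. destruct (Rle_or_lt x (l - e)) as [H|H]; auto.
      exfalso; apply Hn. exists (- x). split; auto. lra. }
    apply Hl2 in H. lra.
Qed.

Lemma outer_nonneg A : has_cov A -> 0 <= outer2 A.
Proof.
  intros H. pose proof (has_cov_outer A H) as [H1 H2].
  destruct (H2 1) as [v [Hv _]]; [lra|].
  destruct (Rle_or_lt 0 (outer2 A)) as [h|h]; auto.
  destruct (H2 (- outer2 A)) as [v' [Hv' Hlt]]; [lra|].
  apply cover2_nonneg in Hv'. lra.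
Qed.

Lemma outer_le_cover A v : cover2 A v -> outer2 A <= v.
Proof.
  intros H. apply (has_cov_outer A). exists v; auto. auto.
Qed.

Lemma has_cov_sub (A B : R*R -> Prop) : (forall p, A p -> B p) -> has_cov B -> has_cov A.
Proof.
  intros Hs [v (a&b&c&d&H1&H2&H3)]. exists v, a, b, c, d. split; auto.
Qed.

Lemma outer_mono (A B : R*R -> Prop) : (forall p, A p -> B p) -> has_cov B -> outer2 A <= outer2 B.
Proof.
  intros Hs HB. pose proof (has_cov_outer B HB) as [_ H2].
  apply Rnot_lt_le; intro Hlt.
  destruct (H2 (outer2 A - outer2 B)) as [v [Hv Hvl]]; [lra|].
  assert (cover2 A v).
  { destruct Hv as (a&b&c&d&H1&H3&H4). exists a, b, c, d. split; auto. }
  apply outer_le_cover in H. lra.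
Qed.

Definition inter (f g : nat -> R) (n : nat) : R :=
  if Nat.even n then f (Nat.div2 n) else g (Nat.div2 n).

Lemma even_dbl n : Nat.even (n + n) = true.
Proof. induction n; auto. rewrite Nat.add_succ_r. simpl. auto. Qed.
Lemma div2_dbl n : Nat.div2 (n + n) = n.
Proof. induction n; auto. rewrite Nat.add_succ_r. simpl. auto. Qed.

Lemma odd_dbl n : Nat.even (S (n + n)) = false.
Proof. induction n; auto. rewrite Nat.add_succ_r. simpl. auto. Qed.
Lemma div2_odbl n : Nat.div2 (S (n + n)) = n.
Proof. induction n; auto. rewrite Nat.add_succ_r. simpl in *. auto. Qed.

Lemma sum_inter f g n :
  sum_f_R0 (inter f g) (S (n + n)) = sum_f_R0 f n + sum_f_R0 g n /\
  sum_f_R0 (inter f g) (S (S (n + n))) = sum_f_R0 f (S n) + sum_f_R0 g n.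
Proof.
  induction n as [|n [IH1 IH2]].
  - simpl. unfold inter. simpl. split; ring.
  - assert (E : (S n + S n = S (S (n + n)))%nat) by lia.
    rewrite E. split.
    + change (sum_f_R0 (inter f g) (S (S (S (n+n))))) with
        (sum_f_R0 (inter f g) (S (S (n+n))) + inter f g (S (S (S (n+n))))).
      rewrite IH2. unfold inter at 1.
      change (Nat.even (S (S (S (n+n))))) with (Nat.even (S (n+n))).
      change (Nat.div2 (S (S (S (n+n))))) with (S (Nat.div2 (S (n+n)))).
      rewrite odd_dbl, div2_odbl.
      change (sum_f_R0 g (S n)) with (sum_f_R0 g n + g (S n)).
      ring.
    + change (sum_f_R0 (inter f g) (S (S (S (S (n+n)))))) with
        (sum_f_R0 (inter f g) (S (S (S (n+n)))) + inter f g (S (S (S (S (n+n)))))).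
      change (sum_f_R0 (inter f g) (S (S (S (n+n))))) with
        (sum_f_R0 (inter f g) (S (S (n+n))) + inter f g (S (S (S (n+n))))).
      rewrite IH2. unfold inter.
      change (Nat.even (S (S (S (n+n))))) with (Nat.even (S (n+n))).
      change (Nat.div2 (S (S (S (n+n))))) with (S (Nat.div2 (S (n+n)))).
      change (Nat.even (S (S (S (S (n+n)))))) with (Nat.even (n+n)).
      change (Nat.div2 (S (S (S (S (n+n)))))) with (S (S (Nat.div2 (n+n)))).
      rewrite odd_dbl, div2_odbl, even_dbl, div2_dbl.
      change (sum_f_R0 g (S n)) with (sum_f_R0 g n + g (S n)).
      change (sum_f_R0 f (S (S n))) with (sum_f_R0 f (S n) + f (S (S n))).
      ring.
Qed.

Lemma par_dec k : exists n, (k = n + n \/ k = S (n + n))%nat.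
Proof.
  induction k as [|k [n [H|H]]]. exists 0%nat; auto.
  exists n; right; lia. exists (S n); left; lia.
Qed.

Lemma isum_inter f g vf vg : infinite_sum f vf -> infinite_sum g vg ->
  infinite_sum (inter f g) (vf + vg).
Proof.
  intros Hf Hg eps He.
  destruct (Hf (eps/2)) as [N1 H1]; [lra|].
  destruct (Hg (eps/2)) as [N2 H2]; [lra|].
  exists (2 * (N1 + N2) + 2)%nat. intros k Hk.
  destruct (par_dec k) as [n [Ek|Ek]].
  - destruct n as [|n]; [lia|].
    replace k with (S (S (n+n))) by lia.
    rewrite (proj2 (sum_inter f g n)).
    specialize (H1 (S n) ltac:(lia)). specialize (H2 n ltac:(lia)).
    unfold Rdist in *. revert H1 H2; split_Rabs; lra.
  - subst k. rewrite (proj1 (sum_inter f g n)).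
    specialize (H1 n ltac:(lia)). specialize (H2 n ltac:(lia)).
    unfold Rdist in *. revert H1 H2; split_Rabs; lra.
Qed.

Lemma isum_ext f g v : (forall n, f n = g n) -> infinite_sum f v -> infinite_sum g v.
Proof.
  intros He Hf eps Heps. destruct (Hf eps Heps) as [N HN]. exists N. intros n Hn.
  rewrite <- (sum_eq f g n) by auto. auto.
Qed.

Lemma cover_union A B vA vB : cover2 A vA -> cover2 B vB ->
  cover2 (fun p => A p \/ B p) (vA + vB).
Proof.
  intros (a1&b1&c1&d1&H1&H2&H3) (a2&b2&c2&d2&G1&G2&G3).
  exists (inter a1 a2), (inter b1 b2), (inter c1 c2), (inter d1 d2). split; [|split].
  - intro n. unfold inter. destruct (Nat.even n); auto.
  - intros p [Hp|Hp].
    + destruct (H2 p Hp) as [n Hn]. exists (n+n)%nat. unfold inter.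
      rewrite even_dbl, div2_dbl. auto.
    + destruct (G2 p Hp) as [n Hn]. exists (S (n+n))%nat. unfold inter.
      rewrite odd_dbl, div2_odbl. auto.
  - eapply isum_ext; [|apply (isum_inter _ _ _ _ H3 G3)].
    intro n. unfold inter. destruct (Nat.even n); auto.
Qed.

Lemma outer_union A B : has_cov A -> has_cov B ->
  has_cov (fun p => A p \/ B p) /\
  outer2 (fun p => A p \/ B p) <= outer2 A + outer2 B.
Proof.
  intros [vA HA] [vB HB]. split. exists (vA + vB). apply cover_union; auto.
  apply Rnot_lt_le; intro Hlt.
  set (e := outer2 (fun p => A p \/ B p) - (outer2 A + outer2 B)).
  destruct (proj2 (has_cov_outer A (ex_intro _ vA HA)) (e/2)) as [wA [CA LA]]; [unfold e; lra|].
  destruct (proj2 (has_cov_outer B (ex_intro _ vB HB)) (e/2)) as [wB [CB LB]]; [unfold e; lra|].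
  pose proof (outer_le_cover _ _ (cover_union _ _ _ _ CA CB)). unfold e in *. lra.
Qed.

Lemma cover_zero : cover2 (fun _ => False) 0.
Proof.
  exists (fun _ => 0), (fun _ => 0), (fun _ => 0), (fun _ => 0). split; [|split].
  - intros; lra.
  - intros p [].
  - intros eps He. exists 0%nat. intros n _. 
    rewrite (sum_eq _ (fun _ => 0)) by (intros; ring).
    rewrite sum_cte. unfold Rdist. rewrite Rmult_0_l, Rminus_0_r, Rabs_R0. lra.
Qed.

Lemma cover_one a b c d : a <= b -> c <= d ->
  cover2 (fun p => a <= fst p < b /\ c <= snd p < d) ((b - a) * (d - c)).
Proof.
  intros Hab Hcd.
  exists (fun n => match n with O => a | _ => 0 end), (fun n => match n with O => b | _ => 0 end),
    (fun n => match n with O => c | _ => 0 end), (fun n => match n with O => d | _ => 0 end).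
  split; [|split].
  - intros [|n]; lra.
  - intros p Hp. exists 0%nat. auto.
  - intros eps He. exists 0%nat. intros n _.
    set (F := fun n0 : nat => _).
    assert (E : forall k, sum_f_R0 F k = (b - a) * (d - c)).
    { induction k. simpl. unfold F. ring. simpl. rewrite IHk. unfold F. ring. }
    rewrite E. unfold Rdist. rewrite Rminus_diag, Rabs_R0. lra.
Qed.

Definition dil (t cx cy : R) (A : R*R -> Prop) (p : R*R) : Prop :=
  A (cx + (fst p - cx)/t, cy + (snd p - cy)/t).

Lemma isum_scal f v k : infinite_sum f v -> infinite_sum (fun n => k * f n) (k * v).
Proof.
  intros Hf eps He.
  destruct (Hf (eps / (Rabs k + 1))) as [N HN].
  { apply Rdiv_lt_0_compat; auto. pose proof (Rabs_pos k); lra. }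
  exists N. intros n Hn. specialize (HN n Hn). unfold Rdist in *.
  rewrite (sum_eq _ (fun i => f i * k)) by (intros; ring).
  rewrite <- scal_sum. rewrite <- Rmult_minus_distr_l, Rabs_mult.
  pose proof (Rabs_pos k). pose proof (Rabs_pos (sum_f_R0 f n - v)).
  assert (Rabs k * Rabs (sum_f_R0 f n - v) <= Rabs k * (eps / (Rabs k + 1))).
  { apply Rmult_le_compat_l; lra. }
  assert (Rabs k * (eps / (Rabs k + 1)) < eps).
  { apply (Rmult_lt_reg_r (Rabs k + 1)). lra.
    replace (Rabs k * (eps / (Rabs k + 1)) * (Rabs k + 1)) with (Rabs k * eps) by (field; lra). nra. }
  lra.
Qed.

Lemma scale_le t z a : 0 < t -> a <= z -> t * a <= t * z.
Proof. intros; apply Rmult_le_compat_l; lra. Qed.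
Lemma scale_lt t z a : 0 < t -> a < z -> t * a < t * z.
Proof. intros; apply Rmult_lt_compat_l; lra. Qed.

Lemma cover_dil t cx cy A v : 0 < t -> cover2 A v -> cover2 (dil t cx cy A) (t * t * v).
Proof.
  intros Ht (a&b&c&d&H1&H2&H3).
  exists (fun n => cx + t * (a n - cx)), (fun n => cx + t * (b n - cx)),
    (fun n => cy + t * (c n - cy)), (fun n => cy + t * (d n - cy)). split; [|split].
  - intros n. destruct (H1 n). split.
    + pose proof (scale_le t (b n - cx) (a n - cx) Ht ltac:(lra)). lra.
    + pose proof (scale_le t (d n - cy) (c n - cy) Ht ltac:(lra)). lra.
  - intros [px py] Hp. unfold dil in Hp. simpl in Hp.
    destruct (H2 _ Hp) as [n Hn]. simpl in Hn. exists n. simpl.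
    assert (Ex : px - cx = t * ((px - cx)/t)) by (field; lra).
    assert (Ey : py - cy = t * ((py - cy)/t)) by (field; lra).
    set (zx := (px - cx)/t) in *. set (zy := (py - cy)/t) in *.
    destruct Hn as [[Ha Hb] [Hc Hd]].
    pose proof (scale_le t zx (a n - cx) Ht ltac:(lra)).
    pose proof (scale_lt t (b n - cx) zx Ht ltac:(lra)).
    pose proof (scale_le t zy (c n - cy) Ht ltac:(lra)).
    pose proof (scale_lt t (d n - cy) zy Ht ltac:(lra)).
    lra.
  - eapply isum_ext; [|apply (isum_scal _ _ (t*t) H3)].
    intro n. simpl. ring.
Qed.

Lemma outer_dil_le t cx cy A : 0 < t -> has_cov A ->
  has_cov (dil t cx cy A) /\ outer2 (dil t cx cy A) <= t * t * outer2 A.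
Proof.
  intros Ht [v Hv]. split. exists (t*t*v). apply cover_dil; auto.
  apply Rnot_lt_le; intro Hlt.
  assert (Htt : 0 < t * t) by nra.
  set (e := (outer2 (dil t cx cy A) - t * t * outer2 A) / (t * t)).
  assert (He : 0 < e) by (unfold e; apply Rdiv_lt_0_compat; lra).
  destruct (proj2 (has_cov_outer A (ex_intro _ v Hv)) e He) as [w [Cw Lw]].
  pose proof (outer_le_cover _ _ (cover_dil t cx cy _ _ Ht Cw)).
  assert (t * t * w < t * t * (outer2 A + e)) by (apply Rmult_lt_compat_l; lra).
  unfold e in *. replace (t * t * (outer2 A + (outer2 (dil t cx cy A) - t * t * outer2 A) / (t * t)))
    with (outer2 (dil t cx cy A)) in H0 by (field; lra). lra.
Qed.

Lemma pow2_pos k : 0 < 2 ^ k.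
Proof. apply pow_lt; lra. Qed.
Lemma inv_pow2_pos k : 0 < / 2 ^ k.
Proof. apply Rinv_0_lt_compat, pow2_pos. Qed.

Lemma div_small D t a : 0 < t -> 0 < a -> Rabs D <= 5/2 * a -> 5 < t -> Rabs (D / t) < a / 2.
Proof.
  intros Ht Ha HD H5. unfold Rdiv. rewrite Rabs_mult, Rabs_inv, (Rabs_pos_eq t) by lra.
  apply (Rmult_lt_reg_r t); auto. rewrite Rmult_assoc, Rinv_l by lra. nra.
Qed.

Definition ctr_x (P : prl) : R := (INR (pj P) + / 2) / 2 ^ (pk P).
Definition ctr_y (m : nat) (P : prl) : R := cs m P * ctr_x P + pb P + wd m / 2.

Lemma five_in_dil m Q t p : 5 < t -> fiveR m Q p ->
  dil t (ctr_x Q) (ctr_y m Q) (par_set m Q) p.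
Proof.
  intros Ht [Hx Hy]. unfold dil, par_set, dyad. simpl.
  fold (ctr_x Q) in Hx, Hy. fold (ctr_y m Q) in Hy.
  unfold Lp in Hx.
  assert (HL := inv_pow2_pos (pk Q)). assert (Hw : 0 < wd m) by apply inv_pow2_pos.
  pose proof (div_small _ t _ ltac:(lra) HL Hx Ht) as Zx.
  pose proof (div_small _ t _ ltac:(lra) Hw Hy Ht) as Zy.
  assert (E : (snd p - ctr_y m Q - cs m Q * (fst p - ctr_x Q)) / t =
     (snd p - ctr_y m Q) / t - cs m Q * ((fst p - ctr_x Q) / t)) by (field; lra).
  rewrite E in Zy. clear E.
  set (zx := (fst p - ctr_x Q) / t) in *. set (zy := (snd p - ctr_y m Q) / t) in *.
  unfold ctr_y, ctr_x in *. unfold Rdiv in *.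
  set (L := / 2 ^ pk Q) in *. set (c := cs m Q) in *.
  apply Rabs_def2 in Zx, Zy.
  split; [split|split]; nra.
Qed.



Lemma cover2_sub (A B : R*R -> Prop) v : (forall p, A p -> B p) -> cover2 B v -> cover2 A v.
Proof.
  intros Hs (a&b&c&d&H1&H2&H3). exists a, b, c, d. split; auto.
Qed.

Lemma par_cov m Q : has_cov (par_set m Q).
Proof.
  set (L := / 2 ^ pk Q). assert (HL : 0 < L) by apply inv_pow2_pos.
  assert (Hw : 0 < wd m) by apply inv_pow2_pos.
  set (c := cs m Q). set (K := Rabs c * ((INR (pj Q) + 1) * L)).
  pose proof (pos_INR (pj Q)).
  assert (HK : 0 <= K) by (unfold K; apply Rmult_le_pos; [apply Rabs_pos| nra]).
  eexists. eapply cover2_sub; [|apply (cover_one (INR (pj Q) * L) ((INR (pj Q) + 1) * L)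
     (pb Q - K - 1) (pb Q + wd m + K + 1)); nra].
  intros [x y] [Hx Hy]. unfold dyad in Hx. simpl in *. fold c in Hy. unfold Rdiv in Hx. fold L in Hx.
  assert (Rabs (c * x) <= K).
  { unfold K. rewrite Rabs_mult. apply Rmult_le_compat_l. apply Rabs_pos.
    rewrite Rabs_pos_eq by nra. lra. }
  apply Rabs_le in H0 || idtac.
  pose proof (Rle_abs (c*x)). pose proof (Rle_abs (-(c*x))). rewrite Rabs_Ropp in H2.
  split; lra.
Qed.

Lemma five_le m Q : has_cov (fiveR m Q) /\ outer2 (fiveR m Q) <= 25 * outer2 (par_set m Q).
Proof.
  pose proof (par_cov m Q) as HP.
  assert (Hd : forall t, 5 < t -> has_cov (fiveR m Q) /\ outer2 (fiveR m Q) <= t * t * outer2 (par_set m Q)).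
  { intros t Ht. destruct (outer_dil_le t (ctr_x Q) (ctr_y m Q) _ ltac:(lra) HP) as [C1 C2].
    assert (Hs : forall p, fiveR m Q p -> dil t (ctr_x Q) (ctr_y m Q) (par_set m Q) p)
      by (intros; apply five_in_dil; auto).
    split. eapply has_cov_sub; eauto.
    eapply Rle_trans; [apply outer_mono; eauto|]. auto. }
  split. apply (Hd 6); lra.
  apply Rnot_lt_le; intro Hlt.
  set (X := outer2 (fiveR m Q)) in *. set (o := outer2 (par_set m Q)) in *.
  assert (Ho : 0 <= o) by (apply outer_nonneg; auto).
  set (D := X - 25 * o).
  set (h := D / (11 * o + 11)).
  assert (Hh : h * (11 * o + 11) = D) by (unfold h; field; lra).
  assert (Hhp : 0 < h) by (unfold h, D; apply Rdiv_lt_0_compat; lra).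
  set (h' := Rmin h 1).
  assert (h' <= h) by apply Rmin_l. assert (h' <= 1) by apply Rmin_r.
  assert (0 < h') by (apply Rmin_glb_lt; lra).
  destruct (Hd (5 + h') ltac:(lra)) as [_ Hle]. fold X o in Hle.
  assert (h' * (10 + h') * o <= 11 * h * o).
  { apply Rmult_le_compat_r; auto. nra. }
  assert (11 * h * o < D) by nra.
  unfold D in *. nra.
Qed.
Definition isect m X Y := exists p, par_set m X p /\ par_set m Y p.
Definition slsub m Y X := forall y, slope_set m Y y -> slope_set m X y.

Lemma cs_in m P : slope_set m P (cs m P).
Proof.
  unfold slope_set, cs, dyad. unfold Rdiv. pose proof (inv_pow2_pos (slk m P)).
  split; nra.
Qed.

Lemma geo m Z Y : (pk Z <= m)%nat -> Lp Z <= Lp Y -> isect m Z Y -> slsub m Y Z ->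
  forall p, par_set m Z p -> fiveR m Y p.
Proof.
  intros Hk HL [q [[Hq1 Hq2] [Hq3 Hq4]]] Hsl p [Hp1 Hp2].
  pose proof (Hsl _ (cs_in m Y)) as Hc. unfold slope_set, dyad in Hc.
  unfold dyad in *. unfold fiveR. unfold Lp in *. unfold Rdiv in *.
  assert (HAB : / 2 ^ pk Z * / 2 ^ slk m Z = wd m).
  { unfold wd, slk. rewrite <- Rinv_mult, <- pow_add. f_equal. f_equal. lia. }
  set (A := / 2 ^ pk Z) in *. set (A' := / 2 ^ pk Y) in *. set (B := / 2 ^ slk m Z) in *.
  assert (HA : 0 < A) by apply inv_pow2_pos. assert (HB : 0 < B) by apply inv_pow2_pos.
  assert (cs m Z = (INR (ps Z) + / 2) * B) as EcZ by (unfold cs; reflexivity).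
  set (cY := cs m Y) in *. set (cZ := cs m Z) in *.
  set (w := wd m) in *.
  assert (HE : Rabs ((cZ - cY) * (fst p - fst q)) <= w / 2).
  { rewrite Rabs_mult. rewrite <- HAB.
    assert (Rabs (cZ - cY) <= B / 2) by (apply Rabs_le; lra).
    assert (Rabs (fst p - fst q) <= A) by (apply Rabs_le; lra).
    replace (A * B / 2) with ((B/2) * A) by field.
    apply Rmult_le_compat; auto; apply Rabs_pos. }
  apply Rabs_le_between in HE || idtac.
  split.
  - apply Rabs_le. lra.
  - apply Rabs_le.
    assert (snd p - ((cY * ((INR (pj Y) + / 2) * A') + pb Y + w * / 2)) - cY * (fst p - (INR (pj Y) + / 2) * A')
      = ((snd p - cZ * fst p) - (snd q - cZ * fst q)) + (cZ - cY) * (fst p - fst q) + ((snd q - cY * fst q) - pb Y - w * / 2)) as Eq by ring.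
    rewrite Eq. pose proof (Rle_abs ((cZ - cY) * (fst p - fst q))).
    pose proof (Rle_abs (- ((cZ - cY) * (fst p - fst q)))). rewrite Rabs_Ropp in H0.
    assert (0 < w) by (unfold w; apply inv_pow2_pos).
    split; lra.
Qed.

Lemma pow2_lt a b : (a < b)%nat -> 2 ^ a < 2 ^ b.
Proof. intros; apply Rlt_pow; lra || auto. Qed.

Lemma Lp_eq_pk X Y : Lp X = Lp Y -> pk X = pk Y.
Proof.
  unfold Lp. intros H. assert (E : 2 ^ pk X = 2 ^ pk Y).
  { rewrite <- (Rinv_inv (2 ^ pk X)), <- (Rinv_inv (2 ^ pk Y)), H. reflexivity. }
  destruct (Nat.lt_trichotomy (pk X) (pk Y)) as [h|[h|h]]; auto;
  apply pow2_lt in h; lra.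
Qed.

Lemma dyad_same k j j' : (forall y, dyad k j y -> dyad k j' y) -> j = j'.
Proof.
  intros H. unfold dyad, Rdiv in *. pose proof (inv_pow2_pos k) as HL.
  specialize (H (INR j * / 2 ^ k)). destruct H as [H1 H2]; [split; nra|].
  apply Rmult_le_reg_r in H1; auto. apply Rmult_lt_reg_r in H2; auto.
  rewrite <- S_INR in H2. apply INR_le in H1. apply INR_lt in H2. lia.
Qed.

Lemma sl_sym m X Y : Lp X = Lp Y -> slsub m Y X -> slsub m X Y.
Proof.
  intros HL Hs. apply Lp_eq_pk in HL.
  unfold slsub, slope_set in *. unfold slk in *. rewrite HL in *.
  apply dyad_same in Hs. rewrite Hs. auto.
Qed.

Definition Inv (m : nat) (Rt : list prl) (s : state) : Prop :=
  (forall X, In X Rt <-> St s X \/ S1 s X \/ S2 s X) /\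
  (forall X, ~ (St s X /\ S1 s X)) /\ (forall X, ~ (St s X /\ S2 s X)) /\
  (forall X, ~ (S1 s X /\ S2 s X)) /\
  (forall X, S2 s X -> covered5 m (S1 s) X) /\
  (forall Y Z, S1 s Y -> St s Z -> Lp Z <= Lp Y /\ ~ (isect m Z Y /\ slsub m Y Z)) /\
  (forall X Y, S1 s X -> S1 s Y -> X <> Y -> isect m X Y -> Lp X <= Lp Y -> ~ slsub m Y X).

Lemma isect_sym m X Y : isect m X Y -> isect m Y X.
Proof. intros [p [h1 h2]]. exists p; auto. Qed.

Lemma Inv_step m Rt s s' : (forall P, In P Rt -> (pk P <= m)%nat) ->
  Inv m Rt s -> sel_step m s s' -> Inv m Rt s'.
Proof.
  intros Hpk (I1&I2a&I2b&I2c&I3&I4&I5) (R0&HR0&Hmax&HS1&HS2&HSt).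
  split; [|split; [|split; [|split; [|split; [|split]]]]].
  - intros X. rewrite I1, HS1, HS2, HSt. split.
    + intros [H|[H|H]]; auto.
      destruct (classic (X = R0)) as [E|E]; auto.
      destruct (classic (covered5 m (S1 s') X)); tauto.
    + intros [H|[[H|H]|[H|H]]]; subst; tauto.
  - intros X [H1 H2]. rewrite HSt in H1. rewrite HS1 in H2. destruct H1 as (H1&H1'&_).
    destruct H2; [eapply I2a; eauto|auto].
  - intros X [H1 H2]. rewrite HSt in H1. rewrite HS2 in H2. destruct H1 as (H1&H1'&H1'').
    destruct H2 as [H2|H2]; [eapply I2b; eauto|tauto].
  - intros X [H1 H2]. rewrite HS1 in H1. rewrite HS2 in H2.
    destruct H1 as [H1|H1]; destruct H2 as [H2|H2].
    + eapply I2c; eauto.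
    + eapply I2a; split; [apply H2|eauto].
    + subst; eapply I2b; eauto.
    + tauto.
  - intros X H. rewrite HS2 in H. destruct H as [H|H]; [|tauto].
    intros p Hp. destruct (I3 X H p Hp) as [Q [HQ HQ']]. exists Q. split; auto.
    apply HS1; auto.
  - intros Y Z HY HZ. rewrite HSt in HZ. destruct HZ as (HZ&HZ'&HZ'').
    rewrite HS1 in HY. destruct HY as [HY|HY]; [apply I4; auto|subst Y].
    split; [apply Hmax; auto|]. intros [Hi Hs]. apply HZ''.
    intros p Hp. exists R0. split; [apply HS1; auto|].
    eapply geo; eauto. apply Hpk, I1; auto.
  - intros X Y HX HY HXY Hi HL. rewrite HS1 in HX, HY.
    destruct HX as [HX|HX]; destruct HY as [HY|HY].
    + eapply I5; eauto.
    + subst Y. destruct (I4 X R0 HX HR0) as [HL' Hn]. intro Hs.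
      apply Hn. split; [apply isect_sym; auto|]. apply sl_sym; auto. lra.
    + subst X. destruct (I4 Y R0 HY HR0) as [HL' Hn]. intro Hs. apply Hn. split; auto.
    + subst; tauto.
Qed.

Lemma list_five m l : has_cov (fun p => exists Q, In Q l /\ fiveR m Q p) /\
  outer2 (fun p => exists Q, In Q l /\ fiveR m Q p) <= 25 * sum_area m l.
Proof.
  induction l as [|Q l [IH1 IH2]].
  - assert (HC : has_cov (fun p => exists Q, In Q nil /\ fiveR m Q p)).
    { exists 0. eapply cover2_sub; [|apply cover_zero]. intros p [Q [[] _]]. }
    split; auto. simpl. eapply Rle_trans; [apply outer_le_cover|].
    eapply cover2_sub; [|apply cover_zero]. intros p [Q [[] _]]. lra.
  - destruct (five_le m Q) as [F1 F2].
    destruct (outer_union _ _ F1 IH1) as [U1 U2].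
    assert (Hs : forall p, (exists Q', In Q' (Q :: l) /\ fiveR m Q' p) ->
       fiveR m Q p \/ (exists Q', In Q' l /\ fiveR m Q' p)).
    { intros p [Q' [[E|H] H']]; [subst; auto|right; eauto]. }
    split. exact (has_cov_sub _ _ Hs U1).
    eapply Rle_trans; [apply (outer_mono _ _ Hs U1)|]. simpl. lra.
Qed.

Lemma Inv_init m Rt : Inv m Rt (mkS (fun X => In X Rt) (fun _ => False) (fun _ => False)).
Proof.
  unfold Inv; simpl. repeat split; intros; try tauto.
Qed.

Lemma Inv_trace m Rt s s' : (forall P, In P Rt -> (pk P <= m)%nat) ->
  clos_refl_trans_1n state (sel_step m) s s' -> Inv m Rt s -> Inv m Rt s'.
Proof.
  intros Hpk H. induction H; auto. intros; apply IHclos_refl_trans_1n.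
  eapply Inv_step; eauto.
Qed.

Theorem mainTheorem4 (delta : R) (m : nat) (u : R -> nat)
  (Rt : list prl) (R1 R2 : prl -> Prop) :
  0 < delta <= 1 ->
  (1 <= m)%nat ->
  (forall x, 0 <= x < 1 -> (u x < 2 ^ m)%nat) ->
  (forall j, measurable1 (fun x => 0 <= x < 1 /\ u x = j)) ->
  (forall P, In P Rt -> inRcal delta m u P) ->
  selection m Rt R1 R2 ->
  ((forall P, In P Rt <-> R1 P \/ R2 P) /\
   (forall P, ~ (R1 P /\ R2 P)) /\
   (forall l1, NoDup l1 -> (forall P, In P l1 <-> R1 P) ->
      outer2 (fun p => exists P, R2 P /\ par_set m P p) <= 25 * sum_area m l1)) /\
  (forall P P', R1 P -> R1 P' -> P <> P' ->
     (exists p, par_set m P p /\ par_set m P' p) ->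
     Lp P <= Lp P' ->
     ~ (forall y, slope_set m P' y -> slope_set m P y)).
Proof.
  intros _ _ _ _ HR [s [Htr [Hst [H1 H2]]]].
  assert (Hpk : forall P, In P Rt -> (pk P <= m)%nat) by (intros P HP; apply (HR P HP)).
  pose proof (Inv_trace m Rt _ _ Hpk Htr (Inv_init m Rt)) as (I1&I2a&I2b&I2c&I3&I4&I5).
  split; [split; [|split]|].
  - intros P. rewrite I1, H1, H2. specialize (Hst P). tauto.
  - intros P [h1 h2]. apply H1 in h1. apply H2 in h2. eapply I2c; eauto.
  - intros l1 _ Hl1. destruct (list_five m l1) as [C1 C2].
    eapply Rle_trans; [|apply C2]. apply outer_mono; auto.
    intros p [P [HP Hp]]. apply H2 in HP. destruct (I3 P HP p Hp) as [Q [HQ HQ']].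
    exists Q. split; auto. apply Hl1, H1; auto.
  - intros P P' HP HP' Hne Hi HL. apply H1 in HP, HP'. eapply I5; eauto.
Qed.
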